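(* Let $Q$ be a finite loop with the antiautomorphic inverse property and let $S$ be a subloop of $Q$. Let \[ \mathcal{L}(Q,S)=\Big\{\bigcap_{x\in X} xS : \emptyset\neq X\subseteq Q\Big\},\qquad \mathcal{R}(Q,S)=\Big\{\bigcap_{x\in X} Sx : \emptyset\neq X\subseteq Q\Big\}, \] each partially ordered by inclusion (they are meet-semilattices with meet given by intersection, in which the cosets are the maximal elements). Then the mapping $xS\mapsto Sx^{-1}$ (from left cosets to right cosets of $S$) is well-defined, and it extends uniquely to an isomorphism of meet-semilattices $\mathcal{L}(Q,S)\to\mathcal{R}(Q,S)$.
   Context: A loop $Q$ has the antiautomorphic inverse property if for every $x\in Q$ there is $x^{-1}\in Q$ with $xx^{-1}=1=x^{-1}x$, and $(xy)^{-1}=y^{-1}x^{-1}$ for all $x,y\in Q$. For a subloop $S\le Q$ and $x\in Q$, $xS=\{xs:s\in S\}$ and $Sx=\{sx:s\in S\}$. An isomorphism of meet-semilattices is a bijection $g$ with $g(a\wedge b)=g(a)\wedge g(b)$. *)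

(* Defs.v *)
From mathcomp Require Import all_boot.
Set Implicit Arguments. Unset Strict Implicit. Unset Printing Implicit Defensive.

Definition is_loop (T : finType) (mul : T -> T -> T) (e : T) : Prop :=
  (forall x, mul e x = x /\ mul x e = x) /\
  (forall a, bijective (mul a)) /\
  (forall a, bijective (fun y => mul y a)).

Definition aaip (T : finType) (mul : T -> T -> T) (e : T) (inv : T -> T) : Prop :=
  (forall x, mul x (inv x) = e /\ mul (inv x) x = e) /\
  (forall x y, inv (mul x y) = mul (inv y) (inv x)).

Definition is_subloop (T : finType) (mul : T -> T -> T) (e : T) (S : {set T}) : Prop :=
  e \in S /\
  (forall a b, a \in S -> b \in S -> mul a b \in S) /\
  (forall a b x, a \in S -> b \in S -> mul a x = b -> x \in S) /\
  (forall a b y, a \in S -> b \in S -> mul y a = b -> y \in S).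

Definition lcoset (T : finType) (mul : T -> T -> T) (x : T) (S : {set T}) : {set T} :=
  [set mul x s | s in S].
Definition rcoset (T : finType) (mul : T -> T -> T) (S : {set T}) (x : T) : {set T} :=
  [set mul s x | s in S].

Definition Lsl (T : finType) (mul : T -> T -> T) (S : {set T}) : {set {set T}} :=
  [set A : {set T} | [exists X : {set T},
     (X != set0) && (A == \bigcap_(x in X) lcoset mul x S)]].
Definition Rsl (T : finType) (mul : T -> T -> T) (S : {set T}) : {set {set T}} :=
  [set A : {set T} | [exists X : {set T},
     (X != set0) && (A == \bigcap_(x in X) rcoset mul S x)]].

Definition meet_iso (T : finType) (L R : {set {set T}}) (g : {set T} -> {set T}) : Prop :=
  (forall A, A \in L -> g A \in R) /\
  {in L &, injective g} /\
  (forall B, B \in R -> exists2 A, A \in L & g A = B) /\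
  (forall A B, A \in L -> B \in L -> g (A :&: B) = g A :&: g B).

(* Main.v *)
Require Import Defs.
From mathcomp Require Import all_boot.

Section P.
Variables (T : finType) (mul : T -> T -> T) (e : T) (inv : T -> T) (S : {set T}).
Hypotheses (HL : is_loop mul e) (HA : aaip mul e inv) (HS : is_subloop mul e S).

Lemma invK : involutive inv.
Proof.
move=> x; case: HL => _ [Hb _]; case: HA => Hi _.
apply: (bij_inj (Hb (inv x))); rewrite (proj1 (Hi (inv x))) (proj2 (Hi x)) //.
Qed.

Lemma invS s : s \in S -> inv s \in S.
Proof.
move=> Hs; case: HS => He [_ [Hd _]]; case: HA => Hi _.
exact: (Hd s e (inv s) Hs He (proj1 (Hi s))).
Qed.

Lemma key x : inv @^-1: lcoset mul x S = rcoset mul S (inv x).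
Proof.
case: HA => _ Hm.
apply/setP => z; rewrite !inE; apply/imsetP/imsetP => [[s Hs Ez]|[s Hs Ez]].
  exists (inv s); first exact: invS.
  by rewrite -Hm -Ez invK.
exists (inv s); first exact: invS.
by rewrite Ez Hm invK.
Qed.

Lemma inL X : X != set0 -> \bigcap_(x in X) lcoset mul x S \in Lsl mul S.
Proof. by move=> H; rewrite inE; apply/existsP; exists X; rewrite H eqxx. Qed.

Lemma gen (h : {set T} -> {set T}) :
  (forall A B, A \in Lsl mul S -> B \in Lsl mul S -> h (A :&: B) = h A :&: h B) ->
  (forall x, h (lcoset mul x S) = rcoset mul S (inv x)) ->
  forall X, X != set0 ->
  h (\bigcap_(x in X) lcoset mul x S) = \bigcap_(x in X) rcoset mul S (inv x).
Proof.
move=> hI hx X.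
have [n] := ubnP #|X|; elim: n X => // n IH X HX HX0.
case: (set_0Vmem X) => [E|[x0 Hx0]]; first by rewrite E eqxx in HX0.
rewrite (big_setD1 x0 Hx0) (big_setD1 x0 Hx0) /=.
case: (eqVneq (X :\ x0) set0) => E.
  by rewrite E !big_set0 !setIT hx.
rewrite hI ?inL // ?hx ?IH //; last first.
  by rewrite inE; apply/existsP; exists [set x0]; rewrite big_set1 eqxx andbT; apply/set0Pn; exists x0; rewrite set11.
by move: HX; rewrite (cardsD1 x0 X) Hx0.
Qed.


End P.

Theorem proposition3p3 (T : finType) (mul : T -> T -> T) (e : T) (inv : T -> T)
  (S : {set T}) :
  is_loop mul e -> aaip mul e inv -> is_subloop mul e S ->
  (forall x y, lcoset mul x S = lcoset mul y S ->
               rcoset mul S (inv x) = rcoset mul S (inv y)) /\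
  (exists g : {set T} -> {set T},
     meet_iso (Lsl mul S) (Rsl mul S) g /\
     (forall x, g (lcoset mul x S) = rcoset mul S (inv x)) /\
     (forall g' : {set T} -> {set T},
        meet_iso (Lsl mul S) (Rsl mul S) g' ->
        (forall x, g' (lcoset mul x S) = rcoset mul S (inv x)) ->
        {in Lsl mul S, g' =1 g})).
Proof.
move=> HL HA HS.
have K := @invK T mul e inv HL HA.
have kx := @key T mul e inv S HL HA HS.
split.
  by move=> x y E; rewrite -!kx E.
pose g (A : {set T}) := inv @^-1: A.
have gI : forall A B, A \in Lsl mul S -> B \in Lsl mul S -> g (A :&: B) = g A :&: g B.
  by move=> A B _ _; rewrite /g preimsetI.
have gg : forall A, g (g A) = A.
  by move=> A; apply/setP => z; rewrite !inE K.
have Hg := @gen T mul inv S g gI kx.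
exists g; split; last split => //.
- split; [|split; [|split]] => //.
  + move=> A; rewrite inE => /existsP [X /andP [HX /eqP ->]].
    rewrite Hg // inE; apply/existsP; exists (inv @: X).
    rewrite imset_eq0 HX big_imset //=; last by move=> a b _ _; exact: (can_inj K).
  + by move=> A B _ _ E; rewrite -(gg A) -(gg B) E.
  + move=> B; rewrite inE => /existsP [Y /andP [HY /eqP ->]].
    exists (\bigcap_(x in inv @: Y) lcoset mul x S).
      by apply: inL; rewrite imset_eq0.
    rewrite Hg ?imset_eq0 // big_imset /=; last by move=> a b _ _; exact: (can_inj K).
    by apply: eq_bigr => y _; rewrite K.
- move=> g' [_ [_ [_ g'I]]] g'x A; rewrite inE => /existsP [X /andP [HX /eqP ->]].
  by rewrite (@gen T mul inv S g' g'I g'x) // Hg.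
Qed.
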